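(* Let $n$ agents have additive $\alpha$-ratio-bounded cost functions ($\alpha\ge1$) over chores $[m]$, and let $\ell=\lceil m/n\rceil\ge3$. Then the full allocation produced by the round-robin procedure (with any fixed ordering of agents and any tie-breaking) is $\left(1+\frac{\alpha-1}{\ell-1}\right)$-EFX.
   Context: A cost function $C:2^{[m]}\to\mathbb{R}_{\ge0}$ is additive if $C(S)=\sum_{c\in S}C(\{c\})$, and $\alpha$-ratio-bounded if $\max_b C(\{b\})/\min_b C(\{b\})\le\alpha$ (positive single-chore costs). Round-robin: fix an ordering $i_1,\dots,i_n$ of agents; in successive rounds, for $t=1,\dots,n$, agent $i_t$ takes a chore of minimum cost to itself among the remaining unallocated chores, until all chores are allocated (so there are $\lceil m/n\rceil$ rounds, the last possibly incomplete). An allocation is $\gamma$-EFX if for all agents $i,j$ and every $c\in X_i$, $C_i(X_i\setminus\{c\})\le\gamma\,C_i(X_j)$. *)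

(* Defs.v *)
From HB Require Import structures.
From mathcomp Require Import all_boot all_order all_algebra all_fingroup.
Set Implicit Arguments. Unset Strict Implicit. Unset Printing Implicit Defensive.
Import Order.TTheory GRing.Theory Num.Theory.
Local Open Scope ring_scope.

Definition cost (R : realFieldType) (m : nat) (c : 'I_m -> R) (S : {set 'I_m}) : R :=
  \sum_(x in S) c x.

(* alpha-ratio-bounded: positive single-chore costs and
   max_b c b / min_b c b <= alpha, i.e. c b / c b' <= alpha for all b, b'. *)
Definition ratio_bounded (R : realFieldType) (m : nat) (alpha : R) (c : 'I_m -> R) : Prop :=
  (forall b, 0 < c b) /\ (forall b b', c b / c b' <= alpha).

(* Round-robin with agent ordering given by the permutation sigma
   (agent i is the (sigma i)-th agent in the order, 0-based) and arbitrary
   tie-breaking: p t is the chore picked at step t (0-based); at step t the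
   agent i with sigma i = t mod n picks a chore of minimum cost to itself
   among the chores not picked at steps u < t. *)
Definition round_robin (R : realFieldType) (n m : nat) (C : 'I_n -> 'I_m -> R)
  (sigma : {perm 'I_n}) (X : 'I_n -> {set 'I_m}) : Prop :=
  exists p : 'I_m -> 'I_m,
    bijective p /\
    (forall (t : 'I_m) (i : 'I_n), nat_of_ord (sigma i) = (t %% n)%N ->
       forall x : 'I_m, (forall u : 'I_m, (u < t)%N -> p u != x) ->
         C i (p t) <= C i x) /\
    (forall i : 'I_n, X i = [set p t | t in [pred t : 'I_m | nat_of_ord (sigma i) == (t %% n)%N]]).

Definition EFX (R : realFieldType) (n m : nat) (gamma : R) (C : 'I_n -> 'I_m -> R)
  (X : 'I_n -> {set 'I_m}) : Prop :=
  forall (i j : 'I_n) (x : 'I_m), x \in X i ->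
    cost (C i) (X i :\ x) <= gamma * cost (C i) (X j).

(* Main.v *)
Require Import Defs.
From HB Require Import structures.
From mathcomp Require Import all_boot all_order all_algebra all_fingroup.
From mathcomp Require Import zify lra.
Import Order.TTheory GRing.Theory Num.Theory.
Local Open Scope ring_scope.

Lemma sum_sub (R : realFieldType) (I : finType) (A B : pred I) (F : I -> R) :
  {subset A <= B} -> (forall i, B i -> 0 <= F i) ->
  \sum_(i in A) F i <= \sum_(i in B) F i.
Proof.
move=> sAB F0; rewrite [X in _ <= X](bigID (mem A)) /=.
have -> : \sum_(i in B | i \in A) F i = \sum_(i in A) F i.
  apply: eq_bigl => i; apply/andP/idP => [[]//|h]; split=> //.
  exact: sAB.
by rewrite lerDl sumr_ge0 // => i /andP[/F0].
Qed.

Theorem mainTheorem9 (R : realFieldType) (n m : nat) (alpha : R)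
  (C : 'I_n -> 'I_m -> R) (sigma : {perm 'I_n}) (X : 'I_n -> {set 'I_m}) :
  (0 < n)%N ->
  1 <= alpha ->
  (forall i, ratio_bounded alpha (C i)) ->
  (3 <= (m + n.-1) %/ n)%N ->
  round_robin C sigma X ->
  EFX (1 + (alpha - 1) / (((m + n.-1) %/ n).-1)%:R) C X.
Proof.
move=> n0 a1; case: m C X => [|m] C X rb.
  by rewrite add0n divn_small // ltn_predL.
move=> l3 [p [bp [pick defX]]] i j x; rewrite !defX => xXi.
set l := ((m.+1 + n.-1) %/ n)%N in l3 *.
have injp : injective p := bij_inj bp.
set c := C i.
have [cpos cratio] := rb i.
have [w _ wmin] : exists2 w : 'I_m.+1, true & forall k, c w <= c k.
  case: (@real_arg_minP _ _ ord0 xpredT c isT) => [k _|w _ H].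
    by rewrite realE (ltW (cpos k)).
  by exists w => // k; apply: H.
set s := nat_of_ord (sigma i).
set s' := nat_of_ord (sigma j).
have sn : (s < n)%N by exact: ltn_ord.
have sn' : (s' < n)%N by exact: ltn_ord.
pose d := if (s <= s')%N then (s' - s)%N else (s' + n - s)%N.
have Hd : (d < n)%N by rewrite /d; case: ifP; lia.
have Hmod : forall t : nat, s = (t %% n)%N -> ((t + d) %% n = s')%N.
  move=> t ht; rewrite (divn_eq t n) -ht /d.
  case: ifP => hs.
    by rewrite -addnA subnKC // modnMDl modn_small.
  have -> : (t %/ n * n + s + (s' + n - s) = (t %/ n).+1 * n + s')%N.
    rewrite mulSn; lia.
  by rewrite modnMDl modn_small.
have F : forall t u : 'I_m.+1, s = (t %% n)%N -> (t <= u)%N -> c (p t) <= c (p u).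
  move=> t u ht htu; apply: (pick t i) => // v vt; apply/eqP => /injp e.
  by move: vt; rewrite e ltnNge htu.
have U1 : forall t1 t2 : 'I_m.+1, s = (t1 %% n)%N -> s = (t2 %% n)%N ->
    (m.+1 <= t1 + d)%N -> (m.+1 <= t2 + d)%N -> t1 = t2.
  have key : forall t1 t2 : 'I_m.+1, s = (t1 %% n)%N -> s = (t2 %% n)%N ->
      (m.+1 <= t1 + d)%N -> (t1 < t2)%N -> False.
    move=> t1 t2 h1 h2 e1 lt12.
    have : (n %| t2 - t1)%N.
      by rewrite -eqn_mod_dvd ?(ltnW lt12) // -h1 -h2.
    case/dvdnP => k hk.
    have k0 : (0 < k)%N by case: k hk => [|k] //; lia.
    have : (n <= t2 - t1)%N by rewrite hk leq_pmull.
    have := ltn_ord t2; lia.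
  move=> t1 t2 h1 h2 e1 e2; apply/val_inj => /=.
  case: (ltngtP t1 t2) => // [lt|lt]; first by case: (key _ _ h1 h2 e1 lt).
  by case: (key _ _ h2 h1 e2 lt).
pose Ti := [pred t : 'I_m.+1 | s == (t %% n)%N].
pose Tj := [pred t : 'I_m.+1 | s' == (t %% n)%N].
have costI : cost c [set p t | t in Ti] = \sum_(t in Ti) c (p t).
  by rewrite /cost big_imset //; move=> a b _ _; apply: injp.
have costJ : cost c [set p t | t in Tj] = \sum_(t in Tj) c (p t).
  by rewrite /cost big_imset //; move=> a b _ _; apply: injp.
have costD : cost c ([set p t | t in Ti] :\ x) + c x = cost c [set p t | t in Ti].
  rewrite /cost [X in _ = X](bigD1 x) //= addrC; congr (_ + _).
  by apply: eq_bigl => y; rewrite !inE andbC.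
set S := \sum_(t in Tj) c (p t).
pose g := fun t : 'I_m.+1 => (inord (t + d) : 'I_m.+1).
have main : \sum_(t in Ti) c (p t) <= S + alpha * c w.
  rewrite (bigID (fun t : 'I_m.+1 => (t + d < m.+1)%N)) /=.
  apply: lerD.
    pose M := [set t : 'I_m.+1 | (t \in Ti) && (t + d < m.+1)%N].
    apply: (@le_trans _ _ (\sum_(t in M) c (p (g t)))).
      rewrite [X in _ <= X](eq_bigl (fun t => (t \in Ti) && (t + d < m.+1)%N));
        last by move=> t; rewrite inE.
      apply: ler_sum => t /andP[ht hd]; apply: F; first by apply/eqP.
      by rewrite /g inordK // leq_addr.
    rewrite -(big_imset (fun u => c (p u))); last first.
      move=> a b; rewrite !inE => /andP[_ ha] /andP[_ hb] /(congr1 val).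
      by rewrite /g /= !inordK //; move/eqP; rewrite eqn_add2r => /eqP/val_inj.
    apply: sum_sub => [u /imsetP[t]|u _]; last exact: ltW.
    rewrite inE => /andP[ht hd] ->; rewrite inE /g inordK //.
    by apply/eqP; rewrite Hmod //; apply/eqP.
  case: (pickP [pred t : 'I_m.+1 | (t \in Ti) && ~~ (t + d < m.+1)%N]) => [e /= He|none].
    rewrite (bigD1 e) //= big1 ?addr0.
      by rewrite -ler_pdivrMr // cratio.
    move=> t /andP[/andP[ht hd] hne]; case/andP: He => he hed.
    rewrite -leqNgt in hd; rewrite -leqNgt in hed.
    by move: hne; rewrite (U1 t e) ?eqxx //; apply/eqP.
  rewrite big_pred0; last by move=> t; move: (none t) => /= ->.
  rewrite mulr_ge0 //; first by rewrite (le_trans _ a1).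
  exact: ltW.
have card : ((l.-1) <= #|Tj|)%N.
  pose h := fun r : 'I_(l.-1) => (inord (s' + r * n) : 'I_m.+1).
  have hlt : forall r : 'I_(l.-1), (s' + r * n < m.+1)%N.
    move=> r; have := ltn_ord r; have := leq_divM (m.+1 + n.-1) n.
    rewrite -/l; nia.
  have hinj : injective h.
    move=> a b /(congr1 val); rewrite /h /= !inordK ?hlt //.
    move/eqP; rewrite eqn_add2l eqn_mul2r => /orP[|/eqP/val_inj //].
    by rewrite eqn0Ngt n0.
  rewrite -[X in (X <= _)%N]card_ord -(card_imset _ hinj).
  apply: subset_leq_card; apply/subsetP => u /imsetP[r _ ->].
  by rewrite inE /h inordK ?hlt // addnC modnMDl modn_small.
have Sge : (l.-1)%:R * c w <= S.
  apply: (@le_trans _ _ (\sum_(t in Tj) c w)).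
    rewrite sumr_const -[c w *+ _]mulr_natl; apply: ler_wpM2r; [exact: ltW (cpos w)|by rewrite ler_nat].
  by rewrite /S; apply: ler_sum => t _; apply: wmin.
have L0 : 0 < (l.-1)%:R :> R by rewrite ltr0n; lia.
rewrite (_ : cost c _ = cost c [set p t | t in Ti] - c x); last by rewrite -costD addrK.
rewrite costI costJ -/S mulrDl mul1r.
have cwx : c w <= c x by apply: wmin.
have : (alpha - 1) * c w <= (alpha - 1) / (l.-1)%:R * S.
  rewrite -mulrA ler_wpM2l ?subr_ge0 // ler_pdivlMl //.
lra.
Qed.
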